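(* Let $F$ and $H$ be graphs such that $F$ is a subgraph of a blow-up of $H$, and let $r\ge |V(F)|$. Then $\widehat{\mathrm{ex}}_r(n,H,\text{Berge-}F)=o(n^{|V(H)|})$ as $n\to\infty$.
   Context: A blow-up of $H$ is obtained by replacing each vertex of $H$ by an independent set and each edge by a complete bipartite graph between the corresponding sets. A hypergraph $\mathcal{H}$ is a Berge copy of a graph $G$ if $V(G)\subseteq V(\mathcal{H})$ and there is a bijection $f:E(G)\to E(\mathcal{H})$ with $e\subseteq f(e)$ for all $e$; Berge-$F$-free means containing no Berge copy of $F$. The shadow graph of $\mathcal{H}$ is the graph on $V(\mathcal{H})$ where $uv$ is an edge iff some hyperedge contains $u$ and $v$. $\widehat{\mathrm{ex}}_r(n,H,\text{Berge-}F)$ is the maximum number of copies of $H$ in the shadow graph of an $r$-uniform Berge-$F$-free $n$-vertex hypergraph. *)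

(* Defs.v *)
From mathcomp Require Import all_boot all_order all_algebra.
Set Implicit Arguments. Unset Strict Implicit. Unset Printing Implicit Defensive.
Import Order.TTheory GRing.Theory Num.Theory.

Definition simple_graph (V : finType) (adj : rel V) : Prop :=
  symmetric adj /\ irreflexive adj.

Definition edges (V : finType) (adj : rel V) : {set {set V}} :=
  [set e : {set V} | [exists u, exists v, adj u v && (e == [set u; v])]].

(* Blow-up of H with part sizes t : each vertex v is replaced by an
   independent set of size t v (vertices (v, i), i < t v) and each edge
   by a complete bipartite graph. *)
Definition blowup_vertex (VH : finType) (t : VH -> nat) : finType :=
  {v : VH & 'I_(t v)}.

Definition blowup_adj (VH : finType) (Hadj : rel VH) (t : VH -> nat)
  : rel (blowup_vertex t) :=
  fun x y => Hadj (tag x) (tag y).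

Definition subgraph_of (VF W : finType) (Fadj : rel VF) (Gadj : rel W) : Prop :=
  exists phi : VF -> W, injective phi /\
    forall u v, Fadj u v -> Gadj (phi u) (phi v).

Definition subgraph_of_blowup (VF VH : finType) (Fadj : rel VF) (Hadj : rel VH)
  : Prop :=
  exists t : VH -> nat, @subgraph_of VF (blowup_vertex t) Fadj (@blowup_adj VH Hadj t).

Definition uniform (n r : nat) (E : {set {set 'I_n}}) : bool :=
  [forall e in E, #|e| == r].

Definition has_berge_copy (VF : finType) (Fadj : rel VF) (n : nat)
  (E : {set {set 'I_n}}) : bool :=
  [exists g : {ffun VF -> 'I_n}, exists f : {ffun {set VF} -> {set 'I_n}},
    [&& injectiveb g,
        [forall e1 in edges Fadj, forall e2 in edges Fadj,
           (f e1 == f e2) ==> (e1 == e2)] &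
        [forall e in edges Fadj, (f e \in E) && (g @: e \subset f e)]]].

Definition berge_free (VF : finType) (Fadj : rel VF) (n : nat)
  (E : {set {set 'I_n}}) : bool := ~~ has_berge_copy Fadj E.

Definition shadow (n : nat) (E : {set {set 'I_n}}) : rel 'I_n :=
  fun x y => (x != y) && [exists e in E, (x \in e) && (y \in e)].

(* Copies of H in a graph G on 'I_n: subgraphs (vertex set, edge set)
   that are images of an injective homomorphism of H into G. *)
Definition copy_of (VH : finType) (Hadj : rel VH) (n : nat)
  (phi : {ffun VH -> 'I_n}) : {set 'I_n} * {set {set 'I_n}} :=
  (phi @: [set: VH], [set phi @: e | e : {set VH} in edges Hadj]).

Definition num_copies (VH : finType) (Hadj : rel VH) (n : nat)
  (Gadj : rel 'I_n) : nat :=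
  #|[set copy_of Hadj phi | phi in
      [pred phi : {ffun VH -> 'I_n} | injectiveb phi &&
         [forall u, forall v, Hadj u v ==> Gadj (phi u) (phi v)]]]|.

Definition ex_hat (r n : nat) (VH : finType) (Hadj : rel VH)
  (VF : finType) (Fadj : rel VF) : nat :=
  \max_(E : {set {set 'I_n}} | uniform r E && berge_free Fadj E)
     num_copies Hadj (shadow E).

(* Main.v *)
Require Import Defs.
From mathcomp Require Import all_boot all_order all_algebra.
From mathcomp Require Import zify lra.
Import Order.TTheory GRing.Theory Num.Theory.

Set Implicit Arguments. Unset Strict Implicit. Unset Printing Implicit Defensive.

Lemma card_ex_le (T I : finType) (P : I -> pred T) :
  #|[set x | [exists i, P i x]]| <= \sum_i #|[set x | P i x]|.
Proof.
rewrite -sum1_card big_mkcond /=.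
under [X in _ <= X]eq_bigr => i _ do rewrite -sum1_card big_mkcond /=.
rewrite [X in _ <= X]exchange_big /=.
apply: leq_sum => x _; rewrite inE; case: existsP => [[i Pi]|] //.
by rewrite (bigD1 i) //= inE Pi.
Qed.

Definition upd (I : finType) (m : nat) (f : {ffun I -> 'I_m}) (w : I) (y : 'I_m) :
  {ffun I -> 'I_m} := [ffun i => if i == w then y else f i].

Lemma count_bad (I : finType) (m : nat) (B : I -> {set 'I_m}) (w : I)
   (X : {ffun I -> 'I_m} -> {set 'I_m}) (c : nat) :
  (forall f g : {ffun I -> 'I_m}, (forall i, i != w -> f i = g i) -> X f = X g) ->
  (forall f, #|X f| <= c) ->
  #|[set f : {ffun I -> 'I_m} | [forall i, f i \in B i] & f w \in X f]| * #|B w|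
    <= c * #|[set f : {ffun I -> 'I_m} | [forall i, f i \in B i]]|.
Proof.
move=> HX Hc.
set Bad := [set f : {ffun I -> 'I_m} | _ & _].
set Fam := [set f : {ffun I -> 'I_m} | _].
rewrite -cardsX.
pose mu := fun p : {ffun I -> 'I_m} * 'I_m => (upd p.1 w p.2, p.1 w).
have Xup : forall f y, X (upd f w y) = X f.
  move=> f y; apply: HX => i /negbTE ni; by rewrite /upd ffunE ni.
have inj : {in setX Bad (B w) &, injective mu}.
  move=> [f y] [g z] _ _ [] E1 E2.
  have -> : y = z.
    by have := congr1 (fun h : {ffun I -> 'I_m} => h w) E1; rewrite /upd !ffunE eqxx.
  congr pair; apply/ffunP => i; case: (eqVneq i w) => [->|niw] //.
  have := congr1 (fun h : {ffun I -> 'I_m} => h i) E1.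
  by rewrite /upd !ffunE (negbTE niw).
rewrite -(card_in_imset inj).
set P := [set p : {ffun I -> 'I_m} * 'I_m | (p.1 \in Fam) && (p.2 \in X p.1)].
have sub : mu @: setX Bad (B w) \subset P.
  apply/subsetP => q /imsetP [[f y] /setXP [fB yB] ->].
  rewrite !inE /=; move: fB; rewrite !inE => /andP [/forallP fB fX].
  rewrite Xup fX andbT; apply/forallP => i; rewrite /upd ffunE.
  by case: eqP => [->|]; [exact yB| rewrite fB].
apply: leq_trans (subset_leq_card sub) _.
have -> : #|P| = \sum_(f in Fam) #|X f|.
  rewrite -sum1_card.
  rewrite (eq_bigl (fun p => (p.1 \in Fam) && (p.2 \in X p.1))); last by move=> p; rewrite inE.
  rewrite -(pair_big_dep (fun f => f \in Fam) (fun f y => y \in X f) (fun _ _ => 1)) /=.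
  by apply: eq_bigr => f _; rewrite sum1_card.
rewrite -sum1_card big_distrr /= muln1.
by apply: leq_sum => f _.
Qed.

Lemma cheb2 (a b T : nat) : a * b ^ T + b * a ^ T <= a ^ T.+1 + b ^ T.+1.
Proof.
wlog ab : a b / a <= b.
  move=> H; case: (leqP a b) => [/H //|/ltnW/H]; lia.
have : a ^ T <= b ^ T by elim: T => [|T IH] //; rewrite !expnS leq_mul.
rewrite !expnS.
move: (a ^ T) (b ^ T) => u v uv; nia.
Qed.

Lemma cheb (G : finType) (d : G -> nat) (T : nat) :
  (\sum_g d g) * (\sum_g d g ^ T) <= #|G| * \sum_g d g ^ T.+1.
Proof.
rewrite -(leq_pmul2l (isT : 0 < 2)).
rewrite big_distrl /=.
under eq_bigr => i _ do rewrite big_distrr /=.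
have E : \sum_i \sum_j d i * d j ^ T = \sum_i \sum_j d j * d i ^ T.
  by rewrite exchange_big.
have E2 : \sum_i \sum_j (d i * d j ^ T + d j * d i ^ T) = 2 * \sum_i \sum_j d i * d j ^ T.
  under eq_bigr => i _ do rewrite big_split /=.
  by rewrite big_split /= -E addnn mul2n.
rewrite -E2.
apply: (@leq_trans (\sum_i \sum_j (d i ^ T.+1 + d j ^ T.+1))).
  apply: leq_sum => i _; apply: leq_sum => j _; have := cheb2 (d i) (d j) T; lia.
have E3 : \sum_(i : G) \sum_(j : G) (d i ^ T.+1 + d j ^ T.+1) = \sum_(i : G) (#|G| * d i ^ T.+1) + \sum_(i : G) \sum_(j : G) d j ^ T.+1.
  transitivity (\sum_(i : G) (#|G| * d i ^ T.+1 + \sum_(j : G) d j ^ T.+1)).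
    by apply: eq_bigr => i _; rewrite big_split /= sum_nat_const.
  by rewrite big_split.
rewrite E3 -big_distrr /= sum_nat_const /=; rewrite !cardE; lia.
Qed.

Lemma power_mean (G : finType) (d : G -> nat) (T : nat) :
  (\sum_g d g) ^ T.+1 <= #|G| ^ T * \sum_g d g ^ T.+1.
Proof.
elim: T => [|T IH]; first by rewrite expn0 mul1n expn1; apply: leq_sum => g _; rewrite expn1.
rewrite expnS (leq_trans (leq_mul (leqnn _) IH)) //.
rewrite mulnCA expnSr -mulnA leq_mul2l (cheb d T.+1) orbT //.
Qed.

Definition boxP (I : finType) (T q : nat) : Prop :=
  exists N, forall n, N <= n -> forall S : {set {ffun I -> 'I_n}},
    n ^ #|I| <= q * #|S| ->
    exists A : I -> {set 'I_n}, (forall i, T <= #|A i|) /\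
      (forall f : {ffun I -> 'I_n}, (forall i, f i \in A i) -> f \in S).

Lemma box_base (I : finType) T q : #|I| = 0 -> boxP I T q.
Proof.
move=> HI; exists T => n nT S; rewrite HI expn0 => Sq.
have : 0 < #|S| by move: Sq; case: #|S| => //; rewrite muln0.
case/card_gt0P => f0 f0S.
exists (fun _ => setT); split => [i|f _]; first by rewrite cardsT card_ord.
suff -> : f = f0 by [].
apply/ffunP => i; by have := card0_eq HI i; rewrite inE.
Qed.

Lemma noninj_count (T n : nat) :
  #|[set b : {ffun 'I_T -> 'I_n} | ~~ injectiveb b]| * n <= T * T * n ^ T.
Proof.
pose X (p : 'I_T * 'I_T) (b : {ffun 'I_T -> 'I_n}) : {set 'I_n} :=
  if p.1 == p.2 then set0 else [set b p.1].
pose bad (p : 'I_T * 'I_T) := [set b : {ffun 'I_T -> 'I_n} |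
   [forall i, b i \in (setT : {set 'I_n})] & b p.2 \in X p b].
have sub : [set b : {ffun 'I_T -> 'I_n} | ~~ injectiveb b] \subset
           [set b | [exists p, b \in bad p]].
  apply/subsetP => b; rewrite !inE => ninj; apply/existsP.
  case: (boolP [exists p : 'I_T * 'I_T, (p.1 != p.2) && (b p.1 == b p.2)]).
    case/existsP => p /andP [np /eqP E]; exists p; rewrite inE.
    apply/andP; split; first by apply/forallP => i; rewrite inE.
    by rewrite /X (negbTE np) inE E.
  move=> H; exfalso; move/negP: ninj; apply; apply/injectiveP => x y E.
  apply/eqP; apply: contraNT H => nxy; apply/existsP; exists (x, y) => /=.
  by rewrite nxy E eqxx.
apply: leq_trans (leq_mul (subset_leq_card sub) (leqnn n)) _.
apply: leq_trans (leq_mul (card_ex_le _) (leqnn n)) _.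
rewrite big_distrl /=.
apply: (@leq_trans (\sum_(p : 'I_T * 'I_T) n ^ T)); last first.
  by rewrite sum_nat_const card_prod card_ord.
apply: leq_sum => p _.
have -> : [set x | x \in bad p] = bad p by apply/setP => x; rewrite inE.
have Hc := @count_bad 'I_T n (fun _ => setT) p.2 (X p) 1.
have Hc' := Hc ltac:(move=> f g Hfg; rewrite /X; case: eqP => // np; rewrite Hfg //; by apply/eqP)
   ltac:(move=> f; rewrite /X; case: eqP => _; by rewrite ?cards0 ?cards1).
rewrite cardsT card_ord in Hc'.
apply: leq_trans Hc' _.
rewrite mul1n; apply: leq_trans (max_card _) _.
by rewrite card_ffun card_ord card_ord.
Qed.

Section Step.
Variables (I : finType) (i0 : I).
Let J := {i : I | i != i0}.

Lemma cardJ : #|I| = #|{: J}|.+1.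
Proof.
rewrite card_sig.
have -> : #|[pred x | x != i0]| = #|predC1 i0| by apply: eq_card => x.
rewrite cardC1; apply/esym/prednK/card_gt0P; by exists i0.
Qed.

Definition join n (g : {ffun J -> 'I_n}) (y : 'I_n) : {ffun I -> 'I_n} :=
  [ffun i => if (insub i : option J) is Some j then g j else y].

Definition splitf n (f : {ffun I -> 'I_n}) : {ffun J -> 'I_n} := [ffun j => f (val j)].

Lemma join_i0 n g (y : 'I_n) : join g y i0 = y.
Proof. by rewrite ffunE insubN // negbK. Qed.

Lemma join_val n g (y : 'I_n) j : join g y (val j) = g j.
Proof. by rewrite ffunE valK. Qed.

Lemma join_split n (f : {ffun I -> 'I_n}) : join (splitf f) (f i0) = f.
Proof.
apply/ffunP => i; rewrite ffunE; case: insubP => [j _ <-|]; first by rewrite ffunE.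
by rewrite negbK => /eqP ->.
Qed.

Lemma splitf_join n g (y : 'I_n) : splitf (join g y) = g.
Proof. by apply/ffunP => j; rewrite ffunE join_val. Qed.

Lemma sum_d n (S : {set {ffun I -> 'I_n}}) :
  \sum_(g : {ffun J -> 'I_n}) #|[set y | join g y \in S]| = #|S|.
Proof.
pose P := [set p : {ffun J -> 'I_n} * 'I_n | join p.1 p.2 \in S].
have inj : {in P &, injective (fun p => join p.1 p.2)}.
  move=> [g y] [g' y'] _ _ /= E.
  have h1 := congr1 (@splitf n) E; have h2 := congr1 (fun f : {ffun I -> 'I_n} => f i0) E.
  by rewrite /= !splitf_join in h1; rewrite /= !join_i0 in h2; rewrite h1 h2.
have eqS : [set join p.1 p.2 | p in P] = S.
  apply/setP => f; apply/imsetP/idP => [[p pP ->]|fS].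
    by move: pP; rewrite inE.
  by exists (splitf f, f i0); rewrite ?inE /= join_split.
rewrite -{2}eqS (card_in_imset inj) -sum1_card.
rewrite (eq_bigl (fun p => (p.1 \in predT) && (p.2 \in [set y | join p.1 y \in S]))); last first.
  by move=> p; rewrite !inE.
rewrite -(pair_big_dep (fun g => g \in predT) (fun g y => y \in [set y | join g y \in S]) (fun _ _ => 1)) /=.
by apply: eq_bigr => g _; rewrite sum1_card.
Qed.

Lemma sum_Sb n T (S : {set {ffun I -> 'I_n}}) :
  \sum_(b : {ffun 'I_T -> 'I_n}) #|[set g : {ffun J -> 'I_n} | [forall t, join g (b t) \in S]]|
  = \sum_(g : {ffun J -> 'I_n}) #|[set y | join g y \in S]| ^ T.
Proof.
under eq_bigr => b _ do rewrite -sum1_card big_mkcond /=.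
rewrite exchange_big /=; apply: eq_bigr => g _.
rewrite -[T in _ ^ T]card_ord -card_ffun_on -sum1_card [in RHS]big_mkcond /=.
apply: eq_bigr => b _.
have -> : (g \in [set g0 | [forall t, join g0 (b t) \in S]]) = (b \in ffun_on [set y | join g y \in S]).
  rewrite inE; apply/forallP/ffun_onP => H t; have := H t; by rewrite inE.
by [].
Qed.

Lemma box_step T1 : (forall q, boxP {: J} T1.+1 q) -> forall q, boxP I T1.+1 q.
Proof.
move=> IH q; set T := T1.+1.
have [N' HN'] := IH (2 * q ^ T).
exists (N' + 2 * q ^ T * (T * T) + 1) => n Hn S HS.
have n_pos : 0 < n by lia.
rewrite cardJ in HS; set h := #|{: J}| in HS HN'.
pose Sb (b : {ffun 'I_T -> 'I_n}) :=
  [set g : {ffun J -> 'I_n} | [forall t, join g (b t) \in S]].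
have [b /andP [binj bS]] : exists b : {ffun 'I_T -> 'I_n}, injectiveb b && (n ^ h <= 2 * q ^ T * #|Sb b|).
  apply/existsP; case: (boolP [exists b : {ffun 'I_T -> 'I_n}, injectiveb b && (n ^ h <= 2 * q ^ T * #|Sb b|)]) => // /existsPn Hno; exfalso.
  have Hlt : forall b : {ffun 'I_T -> 'I_n}, injectiveb b -> 2 * q ^ T * #|Sb b| < n ^ h.
    by move=> b bi; have := Hno b; rewrite bi /= ltnNge.
  have cardG : #|{: {ffun J -> 'I_n}}| = n ^ h by rewrite card_ffun card_ord.
  set X := \sum_b #|Sb b|.
  have F2 : #|S| ^ T <= (n ^ h) ^ T1 * X.
    rewrite -cardG /X sum_Sb -(sum_d S); exact: power_mean.
  have F1 : (n ^ h.+1) ^ T <= q ^ T * #|S| ^ T by rewrite -expnMn leq_exp2r.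
  set Y := \sum_(b : {ffun 'I_T -> 'I_n} | injectiveb b) #|Sb b|.
  set Z := \sum_(b : {ffun 'I_T -> 'I_n} | ~~ injectiveb b) #|Sb b|.
  have F3 : X = Y + Z by rewrite /X (bigID (fun b : {ffun 'I_T -> 'I_n} => injectiveb b)).
  set K := #|[set b : {ffun 'I_T -> 'I_n} | ~~ injectiveb b]|.
  have F4 : Z <= K * n ^ h.
    apply: (@leq_trans (\sum_(b : {ffun 'I_T -> 'I_n} | ~~ injectiveb b) n ^ h)).
      by apply: leq_sum => b _; rewrite -cardG max_card.
    by rewrite sum_nat_const /K cardsE.
  have F5 : K * n <= T * T * n ^ T := noninj_count T n.
  have F6 : 2 * q ^ T * Y <= n ^ T * n ^ h.
    rewrite /Y big_distrr /=.
    apply: (@leq_trans (\sum_(b : {ffun 'I_T -> 'I_n} | injectiveb b) n ^ h)).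
      by apply: leq_sum => b bi; apply: ltnW; apply: Hlt.
    apply: (@leq_trans (\sum_(b : {ffun 'I_T -> 'I_n}) n ^ h)); first by rewrite big_mkcond; apply: leq_sum => b _; case: ifP.
    by rewrite sum_nat_const card_ffun !card_ord.
  set P := n ^ h in F4 F6 cardG F2; set Q := n ^ T in F5 F6; set R := q ^ T in F1 F6.
  set M := P ^ T1 in F2.
  have e1 : (n ^ h.+1) ^ T = M * P * Q by rewrite expnSr expnMn /T expnSr.
  have G0 : M * (P * Q) <= M * (R * X).
    rewrite mulnA -e1; apply: leq_trans F1 _; rewrite mulnCA leq_mul2l F2 orbT //.
  have Mpos : 0 < M by rewrite expn_gt0 expn_gt0 n_pos.
  have G1 : P * Q <= R * X by rewrite -(leq_pmul2l Mpos).
  have PQpos : 0 < P * Q by rewrite muln_gt0 !expn_gt0 n_pos.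
  have H1 : n * (P * Q) <= n * (R * X) by rewrite leq_mul2l G1 orbT.
  have H2 : n * (2 * R * Y) <= n * (Q * P) by rewrite leq_mul2l F6 orbT.
  have H3 : 2 * R * P * (K * n) <= 2 * R * P * (T * T * Q) by rewrite leq_mul2l F5 orbT.
  have H4 : 2 * R * n * Z <= 2 * R * n * (K * P) by rewrite leq_mul2l F4 orbT.
  have H5 : n * (P * Q) <= (2 * R * T * T) * (P * Q).
    rewrite F3 in H1. nia.
  have : n <= 2 * R * T * T by rewrite -(leq_pmul2r PQpos).
  rewrite /R; lia.
have nN : N' <= n by lia.
have [AJ [AJc AJS]] := HN' n nN (Sb b) bS.
pose A (i : I) : {set 'I_n} :=
  if (insub i : option J) is Some j then AJ j else [set b t | t : 'I_T].
exists A; split.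
  move=> i; rewrite /A; case: insubP => [j _ _|_]; first exact: AJc.
  by rewrite card_imset ?card_ord //; apply/injectiveP.
move=> f Hf.
have gS : splitf f \in Sb b.
  apply: AJS => j; rewrite ffunE; have := Hf (val j); by rewrite /A valK.
have : f i0 \in A i0 by apply: Hf.
rewrite /A insubN ?negbK // => /imsetP [t _ ft].
move: gS; rewrite inE => /forallP /(_ t); by rewrite -ft join_split.
Qed.

End Step.

Lemma box_lemma T1 : forall h (I : finType), #|I| = h -> forall q, boxP I T1.+1 q.
Proof.
elim=> [|h IH] I HI q; first exact: box_base.
have : 0 < #|I| by rewrite HI.
case/card_gt0P => i0 _.
apply: (@box_step I i0) => q'; apply: IH.
by have := cardJ i0; rewrite HI => -[].
Qed.

Section Berge.
Variables (VF VH : finType) (Fadj : rel VF) (Hadj : rel VH) (n r : nat).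
Variable (E : {set {set 'I_n}}).

Definition F0 (S : {set 'I_n}) : {set 'I_n} := odflt set0 [pick s in E | S \subset s].

Lemma F0_card (S : {set 'I_n}) : uniform r E -> #|F0 S| <= r.
Proof.
move=> /forall_inP U; rewrite /F0; case: pickP => [s /andP [sE _]|_] /=.
  by rewrite (eqP (U s sE)).
by rewrite cards0.
Qed.

Lemma F0_spec (S s : {set 'I_n}) : s \in E -> S \subset s -> (F0 S \in E) && (S \subset F0 S).
Proof.
move=> sE Ss; rewrite /F0; case: pickP => [s' /andP [-> ->] //|/(_ s)] /=.
by rewrite sE Ss.
Qed.

Definition Xb (p : {set VF} * VF) (phi : {ffun VF -> 'I_n}) : {set 'I_n} :=
  if p.2 \in p.1 then set0 else [set phi x | x in p.1] :|: F0 [set phi x | x in p.1].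

Lemma berge_from_box (p : VF -> VH) (A : VH -> {set 'I_n}) (T : nat) :
  irreflexive Hadj -> uniform r E ->
  (forall u v, Fadj u v -> Hadj (p u) (p v)) ->
  #|{: {set VF} * VF}| * (#|VF| + r) < T ->
  (forall a, T <= #|A a|) ->
  (forall f : {ffun VH -> 'I_n}, (forall a, f a \in A a) ->
     forall a b, Hadj a b -> shadow E (f a) (f b)) ->
  has_berge_copy Fadj E.
Proof.
move=> Hirr Hu Hp HT HA Hbox.
pose B u := A (p u).
pose Fam := [set phi : {ffun VF -> 'I_n} | [forall u, phi u \in B u]].
pose bad q := [set phi : {ffun VF -> 'I_n} | [forall u, phi u \in B u] & phi q.2 \in Xb q phi].
pose U := [set phi | [exists q, phi \in bad q]].
have Hbad : forall q, #|bad q| * T <= (#|VF| + r) * #|Fam|.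
  move=> q; apply: leq_trans (@count_bad VF n B q.2 (Xb q) (#|VF| + r) _ _).
  - by rewrite leq_mul2l HA orbT.
  - move=> f g Hfg; rewrite /Xb; case: ifP => // wS.
    have -> : [set f x | x in q.1] = [set g x | x in q.1].
      apply: eq_in_imset => x xS; apply: Hfg; apply: contraFN wS => /eqP <-; exact: xS.
    by [].
  - move=> f; rewrite /Xb; case: ifP => _; first by rewrite cards0.
    apply: leq_trans (leq_card_setU _ _).1 _.
    apply: leq_add; last exact: F0_card.
    apply: leq_trans (leq_imset_card _ _) _; exact: max_card.
have HU : #|U| * T <= #|{: {set VF} * VF}| * (#|VF| + r) * #|Fam|.
  apply: leq_trans (leq_mul (card_ex_le _) (leqnn T)) _.
  rewrite big_distrl /=.
  apply: (@leq_trans (\sum_(q : {set VF} * VF) (#|VF| + r) * #|Fam|)); last first.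
    by rewrite sum_nat_const mulnA.
  apply: leq_sum => q _.
  have -> : [set x | x \in bad q] = bad q by apply/setP => x; rewrite inE.
  exact: Hbad.
have Bne : forall u, exists x, x \in B u.
  move=> u; have : 0 < #|B u| by apply: leq_trans (HA (p u)); lia.
  by case/card_gt0P => x xB; exists x.
have Bne' : forall a, exists x, x \in A a.
  move=> a; have : 0 < #|A a| by apply: leq_trans (HA a); lia.
  by case/card_gt0P => x xB; exists x.
have Fam_pos : 0 < #|Fam|.
  apply/card_gt0P; exists [ffun u => xchoose (Bne u)]; rewrite inE; apply/forallP => u.
  by rewrite ffunE; exact: xchooseP.
have : ~~ (Fam \subset U).
  apply/negP => /subset_leq_card sub.
  have : #|Fam| * T <= #|{: {set VF} * VF}| * (#|VF| + r) * #|Fam|.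
    apply: leq_trans HU; by rewrite leq_mul2r sub orbT.
  rewrite [X in _ <= X]mulnC leq_pmul2l //; lia.
case/subsetPn => phi phiF phiU.
have phiB : [forall u, phi u \in B u] by move: phiF; rewrite inE.
have nX : forall q, phi q.2 \notin Xb q phi.
  move=> q; apply/negP => Hq; move/negP: phiU; apply; rewrite inE; apply/existsP; exists q.
  by rewrite inE phiB.
have hom : forall u v, Fadj u v -> shadow E (phi u) (phi v).
  move=> u v Fuv; have Huv := Hp u v Fuv.
  have puv : p u != p v by apply: contraTneq Huv => ->; rewrite Hirr.
  pose f0 := [ffun a => if a == p u then phi u else if a == p v then phi v
                        else xchoose (Bne' a)].
  have f0A : forall a, f0 a \in A a.
    move=> a; rewrite ffunE; case: eqP => [->|_]; first by have := forallP phiB u.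
    case: eqP => [->|_]; first by have := forallP phiB v.
    exact: xchooseP.
  have := Hbox f0 f0A _ _ Huv.
  by rewrite !ffunE eqxx eq_sym (negbTE puv) eqxx.
have espec : forall e, e \in edges Fadj ->
    (F0 [set phi x | x in e] \in E) && ([set phi x | x in e] \subset F0 [set phi x | x in e]).
  move=> e; rewrite inE => /existsP [u /existsP [v /andP [Fuv /eqP ->]]].
  move: (hom u v Fuv); rewrite /shadow => /andP [_ /existsP [s /and3P [sE us vs]]].
  apply: (F0_spec sE); apply/subsetP => y /imsetP [x]; rewrite !inE => /orP [] /eqP -> ->; done.
have coll : forall (e1 e2 : {set VF}) (w : VF), e2 \in edges Fadj -> w \in e2 -> w \notin e1 ->
    F0 [set phi x | x in e1] = F0 [set phi x | x in e2] -> False.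
  move=> e1 e2 w e2E we2 we1 Eq.
  have := nX (e1, w); rewrite /Xb /= (negbTE we1) inE negb_or => /andP [_].
  rewrite Eq; move/andP: (espec e2 e2E) => [_ /subsetP sub].
  by rewrite sub // imset_f.
apply/existsP; exists phi; apply/existsP; exists [ffun S : {set VF} => F0 [set phi x | x in S]].
apply/and3P; split.
- apply/injectiveP => u w Euw; apply/eqP; apply: contraT => nuw.
  have := nX ([set u], w); rewrite /Xb /= inE eq_sym (negbTE nuw) inE.
  by rewrite imset_set1 inE Euw eqxx.
- apply/forall_inP => e1 e1E; apply/forall_inP => e2 e2E; apply/implyP; rewrite !ffunE => /eqP Eq.
  apply: contraT => ne; rewrite eqEsubset negb_and in ne.
  case/orP: ne => /subsetPn [w w1 w2].
    by case: (coll e2 e1 w e1E w1 w2 (esym Eq)).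
  by case: (coll e1 e2 w e2E w1 w2 Eq).
- apply/forall_inP => e eE; rewrite ffunE; exact: espec.
Qed.

End Berge.

Unset Implicit Arguments.
Local Open Scope ring_scope.

Theorem corollary8 (VF VH : finType) (Fadj : rel VF) (Hadj : rel VH) (r : nat) :
  simple_graph Fadj -> simple_graph Hadj ->
  subgraph_of_blowup Fadj Hadj ->
  (#|VF| <= r)%N ->
  forall eps : rat, 0 < eps ->
    exists N : nat, forall n : nat, (N <= n)%N ->
      (ex_hat r n Hadj Fadj)%:R <= eps * (n%:R) ^+ #|VH|.
Proof.
move=> _ [_ Hirr] [t [psi [_ psi_hom]]] _ eps eps_pos.
pose p u := tag (psi u).
have Hp : forall u v, Fadj u v -> Hadj (p u) (p v) by move=> u v /psi_hom.
pose q := Num.Def.archi_bound (eps^-1).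
have hq : eps^-1 < q%:R by apply: archi_boundP; rewrite invr_ge0 ltW.
have hq1 : 1 <= eps * q%:R.
  have : eps * eps^-1 < eps * q%:R by rewrite ltr_pM2l.
  by rewrite mulfV ?gt_eqF // => /ltW.
pose T1 := (#|{: {set VF} * VF}| * (#|VF| + r))%N.
have [N HN] := box_lemma T1 (erefl #|VH|) q.
exists N => n nN.
have key : forall E : {set {set 'I_n}}, uniform r E -> berge_free Fadj E ->
    (num_copies Hadj (shadow E) * q <= n ^ #|VH|)%N.
  move=> E EU EB.
  pose Sset := [set phi : {ffun VH -> 'I_n} | injectiveb phi &&
         [forall u, forall v, Hadj u v ==> shadow E (phi u) (phi v)]].
  have c1 : (num_copies Hadj (shadow E) <= #|Sset|)%N.
    rewrite /num_copies; apply: leq_trans (leq_imset_card _ _) _.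
    by rewrite cardsE.
  have c2 : ~~ (n ^ #|VH| <= q * #|Sset|)%N.
    apply/negP => /(HN n nN Sset) [A [HA HAS]].
    move/negP: EB; apply.
    apply: (@berge_from_box VF VH Fadj Hadj n r E p A T1.+1) => //.
    move=> f fA a b Hab; have := HAS f fA; rewrite inE => /andP [_ /forallP /(_ a) /forallP /(_ b)].
    by rewrite Hab.
  rewrite -ltnNge in c2.
  rewrite mulnC; apply: leq_trans (ltnW c2); by rewrite leq_mul2l c1 orbT.
have qpos : (0 < q)%N.
  case: (posnP q) => // q0; move: hq1; rewrite q0 mulr0; by [].
have Hex : (ex_hat r n Hadj Fadj * q <= n ^ #|VH|)%N.
  rewrite -leq_divRL //; apply/bigmax_leqP => E /andP [EU EB].
  rewrite leq_divRL //; exact: key.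
have Hr : (ex_hat r n Hadj Fadj)%:R * q%:R <= (n%:R : rat) ^+ #|VH|.
  by rewrite -natrM -natrX ler_nat.
have c0 : 0 <= (ex_hat r n Hadj Fadj)%:R :> rat by [].
nra.
Qed.
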